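(* For any suitable parameters $(m,q,d,\tau)$, the shifted projection protocol $\Pi$ is perfectly safe: for every run $\rho$ of $\Pi$, every card $c\in\Omega$ and every agent $P$, $\Pr(c\in H_P\mid\rho)=\tau_P/|\tau|$.
   Context: Agents $\mathcal A=\{A,B_1,\dots,B_m\}$ speak in order $A,B_1,\dots,B_m$. A distribution type is a vector $\tau=(\tau_P)_{P\in\mathcal A}$ of positive integers, $|\tau|=\sum_P\tau_P$; the deck $\Omega$ has $|\tau|$ cards; a deal of type $\tau$ is a partition $H=(H_P)_P$ of $\Omega$ with $|H_P|=\tau_P$. Suitable parameters: $m>1$, $q>m$ a prime power, $d>0$, $|\tau|=q^{d+1}$, $\tau_A=q^{d+1}-q^d$, $\tau_{B_k}>q^{d-1}$ for each $k\in[1,m]$. A transversal hyperplane $V\subseteq\mathbb F_q^{d+1}$ is $\{x: x_{d+1}=a_1x_1+\dots+a_dx_d+b\}$; $\sigma(V)=(a_1,\dots,a_d)$; $\pi$ projects $\mathbb F_q^{d+1}$ onto the first $d$ coordinates; $\pi^V_\downarrow(w)=\pi(w)+\sigma(V)$ for $w\in V$. Shifted projection protocol (tokens: maps $\Omega\to\mathbb F_q^{d+1}$ and subsets of $\mathbb F_q^d$; runs are finite token sequences, $\rho*a$ appends $a$): maximal executions for deal $H$ are $(H,f,X_1,\dots,X_m)$ with $f:\Omega\to\mathbb F_q^{d+1}$ a bijection such that $V=\mathbb F_q^{d+1}\setminus f[H_A]$ is a transversal hyperplane and $X_k=\pi^V_\downarrow[f[H_{B_k}]]$; $\Pi(H,\rho)$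 is the set of tokens $a$ with $(H,\rho*a)$ an initial segment of a maximal execution; an execution is $(H,a_0,\dots,a_n)$ with $a_k\in\Pi(H,a_0,\dots,a_{k-1})$ for all $k$; $\rho$ is a run of $\Pi$ if some $(H,\rho)$ is an execution. Probability model: a deal $H$ is drawn uniformly at random among deals of type $\tau$; then, starting from the empty run, while $\Pi(H,\rho)\neq\emptyset$ for the current run $\rho$, a token is drawn uniformly at random from $\Pi(H,\rho)$ and appended. The event ''$\rho$'' means the first $|\rho|$ tokens produced are exactly $\rho$. *)

(* Defs.v *)
From HB Require Import structures.
From mathcomp Require Import all_boot all_order all_algebra.
Set Implicit Arguments. Unset Strict Implicit. Unset Printing Implicit Defensive.
Import Order.TTheory GRing.Theory Num.Theory.
Local Open Scope ring_scope.

(* Agents: 'I_m.+1, with ord0 = A and lift ord0 k = B_(k+1) for k : 'I_m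
   (so the speaking order A, B_1, ..., B_m is the order of 'I_m.+1).
   F_q is an arbitrary finite field F, q = #|F|; F_q^n is 'rV[F]_n.
   Coordinate x_(d+1) of x : 'rV_(d.+1) is x ord0 ord_max. *)

Section Protocol.
Variables (F : finFieldType) (m d : nat) (Omega : finType).

Definition agent := 'I_m.+1.
Definition agentA : agent := ord0.
Definition agentB (k : 'I_m) : agent := lift ord0 k.

(* A deal H = (H_P)_P, a partition of Omega indexed by agents, is represented
   by the map sending each card to the agent holding it. *)
Definition deal := {ffun Omega -> agent}.
Definition hand (H : deal) (P : agent) : {set Omega} := [set c | H c == P].
Definition is_deal_of_type (tau : agent -> nat) (H : deal) : bool :=
  [forall P, #|hand H P| == tau P].

Definition token := ({ffun Omega -> 'rV[F]_(d.+1)} + {set 'rV[F]_d})%type.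
Definition run := seq token.

Definition proj (x : 'rV[F]_(d.+1)) : 'rV[F]_d :=
  \row_(i < d) x ord0 (widen_ord (leqnSn d) i).

Definition transversal_hyperplane (a : 'rV[F]_d) (b : F) : {set 'rV[F]_(d.+1)} :=
  [set x : 'rV[F]_(d.+1) | x ord0 ord_max == \sum_(i < d) a 0 i * proj x ord0 i + b].

Definition shifted_proj_image (a : 'rV[F]_d) (f : {ffun Omega -> 'rV[F]_(d.+1)})
  (S : {set Omega}) : {set 'rV[F]_d} :=
  [set proj (f c) + a | c in S].

(* (f, a, b) yields a maximal execution for H : f is a bijection and
   F_q^(d+1) \ f[H_A] is the transversal hyperplane with parameters (a, b) *)
Definition valid_choice (H : deal)
  (p : {ffun Omega -> 'rV[F]_(d.+1)} * 'rV[F]_d * F) : bool :=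
  let: (f, a, b) := p in
  [&& injectiveb f, [forall y, exists c, f c == y] &
      ~: (f @: hand H agentA) == transversal_hyperplane a b].

Definition exec_of (H : deal) (f : {ffun Omega -> 'rV[F]_(d.+1)}) (a : 'rV[F]_d) : run :=
  inl f :: [seq inr (shifted_proj_image a f (hand H (agentB k))) | k <- enum 'I_m].

Definition max_execs (H : deal) : seq run :=
  [seq exec_of H p.1.1 p.1.2 | p <- enum {: {ffun Omega -> 'rV[F]_(d.+1)} * 'rV[F]_d * F}
     & valid_choice H p].

Definition Pi (H : deal) (rho : run) : {set token} :=
  [set t | has (prefix (rcons rho t)) (max_execs H)].

Definition tok0 : token := inr set0.

Definition is_execution (tau : agent -> nat) (H : deal) (rho : run) : bool :=
  is_deal_of_type tau H &&
  [forall k : 'I_(size rho), nth tok0 rho k \in Pi H (take k rho)].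

Definition is_run (tau : agent -> nat) (rho : run) : Prop :=
  exists H, is_execution tau H rho.

(* Probability that, given the deal H, the first |rho| tokens produced by the
   uniform sequential sampling are exactly rho. *)
Definition run_weight (H : deal) (rho : run) : rat :=
  \prod_(k < size rho)
     (if nth tok0 rho k \in Pi H (take k rho)
      then (#|Pi H (take k rho)|%:R)^-1 else 0).

Definition prob_and (tau : agent -> nat) (E : pred deal) (rho : run) : rat :=
  (\sum_(H : deal | is_deal_of_type tau H && E H) run_weight H rho)
  / (#|[set H : deal | is_deal_of_type tau H]|%:R).

Definition cond_prob (tau : agent -> nat) (E : pred deal) (rho : run) : rat :=
  prob_and tau E rho / prob_and tau predT rho.

End Protocol.

(* Main.v *)
Require Import Defs.
From mathcomp Require Import all_boot all_order all_algebra.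
From mathcomp Require Import ring lra perm.
Set Implicit Arguments. Unset Strict Implicit. Unset Printing Implicit Defensive.
Import Order.TTheory GRing.Theory Num.Theory.
Local Open Scope ring_scope.


Section Geo.
Variables (F : finFieldType) (d : nat).
Implicit Types (x y : 'rV[F]_(d.+1)) (p a u : 'rV[F]_d).

Definition lastc x : F := x ord0 ord_max.
Definition dot (a p : 'rV[F]_d) : F := \sum_(i < d) a 0 i * p 0 i.
Definition mk p (t : F) : 'rV[F]_(d.+1) :=
  \row_(j < d.+1) match unlift ord_max j with Some i => p 0 i | None => t end.

Lemma widen_lift (i : 'I_d) : widen_ord (leqnSn d) i = lift ord_max i.
Proof. by apply: val_inj; rewrite /= /bump leqNgt ltn_ord. Qed.

Lemma proj_mk p t : proj (mk p t) = p.
Proof. by apply/rowP => i; rewrite !mxE widen_lift liftK. Qed.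

Lemma last_mk p t : lastc (mk p t) = t.
Proof. by rewrite /lastc mxE unlift_none. Qed.

Lemma mk_eta x : mk (proj x) (lastc x) = x.
Proof.
apply/rowP => j; rewrite mxE; case: unliftP => [i ->|->].
  by rewrite mxE widen_lift.
by [].
Qed.

Lemma dotDl a b p : dot (a + b) p = dot a p + dot b p.
Proof. by rewrite /dot -big_split; apply: eq_bigr => i _; rewrite !mxE mulrDl. Qed.
Lemma dotDr a p q : dot a (p + q) = dot a p + dot a q.
Proof. by rewrite /dot -big_split; apply: eq_bigr => i _; rewrite !mxE mulrDr. Qed.
Lemma dotNl a p : dot (- a) p = - dot a p.
Proof. by rewrite /dot -sumrN; apply: eq_bigr => i _; rewrite !mxE mulNr. Qed.

Definition phi u (e : F) x : 'rV[F]_(d.+1) :=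
  mk (proj x + u) (lastc x - dot u (proj x) + e).

Lemma proj_phi u e x : proj (phi u e x) = proj x + u.
Proof. by rewrite proj_mk. Qed.

Lemma phi_inj u e : injective (phi u e).
Proof.
move=> x y H.
have hp : proj x = proj y.
  by have := congr1 (@proj F d) H; rewrite !proj_phi => /addIr.
have := congr1 lastc H; rewrite !last_mk hp => /addIr /addIr hl.
by rewrite -(mk_eta x) -(mk_eta y) hp hl.
Qed.

Definition hypb a (b : F) x : bool := lastc x == dot a (proj x) + b.

Lemma hypbE a b x : (x \in transversal_hyperplane a b) = hypb a b x.
Proof. by rewrite inE. Qed.

Definition Tb a u (e b : F) : F := b + e - dot a u + dot u u.

Lemma hypb_phi u e a b x : hypb (a - u) (Tb a u e b) (phi u e x) = hypb a b x.
Proof.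
rewrite /hypb last_mk proj_phi /Tb.
rewrite dotDl dotDr dotDr dotNl dotNl.
rewrite -subr_eq0 -[X in _ = X]subr_eq0; congr (_ == 0); ring.
Qed.

Lemma phi_hit y y' : exists u e, phi u e y' = y.
Proof.
exists (proj y - proj y'), (lastc y - lastc y' + dot (proj y - proj y') (proj y')).
rewrite /phi -[RHS]mk_eta; congr mk; [by rewrite addrC subrK | ring].
Qed.

End Geo.


Section Proto.
Variables (F : finFieldType) (m d : nat) (Omega : finType).
Local Notation deal := (deal m Omega).
Local Notation token := (token F d Omega).
Local Notation run := (run F d Omega).
Local Notation Pi := (@Pi F m d Omega).
Local Notation valid := (@valid_choice F m d Omega).
Local Notation exec := (@exec_of F m d Omega).

Definition act (t : Omega -> Omega) (H : deal) : deal := [ffun x => H (t x)].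

Lemma Pi_E H (r : run) t : (t \in Pi H r) =
  [exists p, valid H p && prefix (rcons r t) (exec H p.1.1 p.1.2)].
Proof.
rewrite inE /max_execs has_map; apply/hasP/existsP => [[p]|[p /andP [v pr]]].
  by rewrite mem_filter => /andP [v _] pr; exists p; rewrite v.
by exists p => //; rewrite mem_filter v mem_enum.
Qed.

Lemma hand_act t H P : hand (act t H) P = t @^-1: hand H P.
Proof. by apply/setP => x; rewrite !inE ffunE. Qed.

Lemma type_act (tau : 'I_m.+1 -> nat) t H : injective t ->
  is_deal_of_type tau (act t H) = is_deal_of_type tau H.
Proof.
move=> ti; apply: eq_forallb => P; by rewrite hand_act card_preimset.
Qed.

Section Perm.
Variables (t ti : Omega -> Omega) (K1 : cancel t ti) (K2 : cancel ti t).

Definition Phi (x : token) : token :=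
  match x with inl h => inl [ffun y => h (ti y)] | inr X => inr X end.

Lemma Phi_inj : injective Phi.
Proof.
move=> [h1|X1] [h2|X2] //= [] E; congr (_ _) => //.
apply/ffunP => x; have := congr1 (fun g : {ffun _ -> _} => g (t x)) E.
by rewrite /= !ffunE K1.
Qed.

Lemma card_Pi_nil_le H : (#|Pi (act t H) [::]| <= #|Pi H [::]|)%N.
Proof.
rewrite -(card_imset _ Phi_inj); apply: subset_leq_card; apply/subsetP.
move=> _ /imsetP [x hx ->]; move: hx; rewrite !Pi_E.
move=> /existsP [[[h a] b] /andP [v pr]].
move: pr => /= /andP [/eqP -> _].
apply/existsP; exists ([ffun y => h (ti y)], a, b); rewrite /= eqxx prefix0s !andbT.
move: v => /and3P [hi hs hv]; apply/and3P; split.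
- apply/injectiveP => x1 y1; rewrite !ffunE => /(injectiveP _ hi) /(congr1 t).
  by rewrite !K2.
- apply/forallP => y; have /existsP [z /eqP hz] := forallP hs y.
  by apply/existsP; exists (t z); rewrite ffunE K1 hz.
- move: hv; congr (_ == _); congr (~: _).
  apply/setP => y; apply/imsetP/imsetP => [[z hz ->]|[z hz ->]].
    exists (t z); last by rewrite ffunE K1.
    by move: hz; rewrite hand_act inE.
  exists (ti z); last by rewrite ffunE.
  by rewrite hand_act inE K2.
Qed.

End Perm.

Lemma act_comp t1 t2 H : act t1 (act t2 H) = act (t2 \o t1) H.
Proof. by apply/ffunP => x; rewrite !ffunE. Qed.

Lemma card_Pi_nil t ti (K1 : cancel t ti) (K2 : cancel ti t) H :
  #|Pi (act t H) [::]| = #|Pi H [::]|.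
Proof.
apply/eqP; rewrite eqn_leq (card_Pi_nil_le K1 K2) /=.
have := card_Pi_nil_le K2 K1 (act t H).
rewrite act_comp.
have -> : act (t \o ti) H = H by apply/ffunP => x; rewrite ffunE /= K2.
by [].
Qed.


Lemma run_weight_cons H (t0 : token) (Ys : run) :
  run_weight H (t0 :: Ys) =
  (if t0 \in Pi H [::] then (#|Pi H [::]|%:R)^-1 else 0) *
  \prod_(k < size Ys) (if nth (tok0 F d Omega) Ys k \in Pi H (t0 :: take k Ys)
     then (#|Pi H (t0 :: take k Ys)|%:R)^-1 else 0).
Proof. by rewrite /run_weight /= big_ord_recl. Qed.

Section Phi.
Variables (f : {ffun Omega -> 'rV[F]_(d.+1)}) (g : 'rV[F]_(d.+1) -> Omega)
  (fK : cancel f g) (gK : cancel g f) (u : 'rV[F]_d) (e : F)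
  (t ti : Omega -> Omega) (tK : cancel t ti) (tiK : cancel ti t)
  (ht : forall x, f (t x) = phi u e (f x))
  (pinv : 'rV[F]_(d.+1) -> 'rV[F]_(d.+1)) (pK : cancel pinv (phi u e)).

Lemma img_actA H P0 y :
  (y \in f @: hand (act t H) P0) = (phi u e y \in f @: hand H P0).
Proof.
rewrite -(gK y) -ht !mem_imset; try exact: (can_inj fK).
by rewrite hand_act inE.
Qed.

Lemma valid_act H a b :
  valid (act t H) (f, a, b) = valid H (f, a - u, Tb a u e b).
Proof.
rewrite /valid_choice; congr (_ && (_ && _)); apply/eqP/eqP => E.
  apply/setP => z; rewrite -(pK z) in_setC -img_actA -in_setC E !hypbE hypb_phi //.
by apply/setP => y; rewrite in_setC img_actA -in_setC E !hypbE hypb_phi.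
Qed.

Lemma shimg_act H a P0 : shifted_proj_image a f (hand (act t H) P0)
  = shifted_proj_image (a - u) f (hand H P0).
Proof.
apply/setP => y; apply/imsetP/imsetP => [[x hx ->]|[z hz ->]].
  exists (t x); first by move: hx; rewrite hand_act inE.
  by rewrite ht proj_phi -addrA [u + _]addrC subrK.
exists (ti z); first by rewrite hand_act inE tiK.
have -> : f z = phi u e (f (ti z)) by rewrite -ht tiK.
by rewrite proj_phi -addrA [u + _]addrC subrK.
Qed.

Lemma exec_act H a : exec (act t H) f a = exec H f (a - u).
Proof. by rewrite /exec_of; congr (_ :: _); apply: eq_map => k; rewrite shimg_act. Qed.

Lemma reparam H (r' : run) :
  [exists p, valid (act t H) p && prefix (inl f :: r') (exec (act t H) p.1.1 p.1.2)] =
  [exists p, valid H p && prefix (inl f :: r') (exec H p.1.1 p.1.2)].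
Proof.
apply/existsP/existsP => [[[[h a] b] /andP [v pr]]|[[[h a] b] /andP [v pr]]].
  have hf : h = f by move: pr; rewrite /exec_of prefix_cons => /andP [/eqP [->]].
  subst h.
  exists (f, a - u, Tb a u e b); apply/andP; split; first by rewrite -valid_act.
  by rewrite -exec_act.
have hf : h = f by move: pr; rewrite /exec_of prefix_cons => /andP [/eqP [->]].
subst h.
have ea : a + u - u = a by rewrite addrK.
have eb : Tb (a + u) u e (b - e + dot (a + u) u - dot u u) = b by rewrite /Tb; ring.
exists (f, a + u, b - e + dot (a + u) u - dot u u); apply/andP; split.
  by rewrite valid_act ea eb.
by rewrite exec_act ea.
Qed.

Lemma Pi_nil_act H : (inl f \in Pi (act t H) [::]) = (inl f \in Pi H [::]).
Proof. by rewrite !Pi_E /=; exact: (reparam H [::]). Qed.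

Lemma Pi_cons_act H Zs : Pi (act t H) (inl f :: Zs) = Pi H (inl f :: Zs).
Proof. by apply/setP => x; rewrite !Pi_E rcons_cons; exact: reparam. Qed.

Lemma weight_act H Ys :
  run_weight (act t H) (inl f :: Ys) = run_weight H (inl f :: Ys).
Proof.
rewrite !run_weight_cons Pi_nil_act (card_Pi_nil tK tiK); congr (_ * _).
by apply: eq_bigr => k _; rewrite Pi_cons_act.
Qed.

End Phi.



Lemma num_sym (tau : 'I_m.+1 -> nat) (w : deal -> rat) (t : Omega -> Omega)
  (tinj : injective t) c1 c2 P (hc : t c2 = c1)
  (hw : forall H, is_deal_of_type tau H -> w (act t H) = w H) :
  \sum_(H | is_deal_of_type tau H && (H c2 == P)) w H =
  \sum_(H | is_deal_of_type tau H && (H c1 == P)) w H.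
Proof.
have [ti tK tiK] := injF_bij tinj.
have ainj : injective (act t).
  move=> H1 H2 E; apply/ffunP => x; have := congr1 (fun G : deal => G (ti x)) E.
  by rewrite /= !ffunE tiK.
rewrite (reindex_inj ainj); apply: eq_big => H.
  by rewrite type_act // ffunE hc.
by move=> /andP [h _]; apply: hw; rewrite -(type_act _ _ tinj).
Qed.

Lemma sum_num (tau : 'I_m.+1 -> nat) (w : deal -> rat) P :
  \sum_(c : Omega) \sum_(H | is_deal_of_type tau H && (H c == P)) w H =
  (tau P)%:R * \sum_(H | is_deal_of_type tau H) w H.
Proof.
under eq_bigr => c _ do rewrite big_mkcondr.
rewrite exchange_big /= mulr_sumr; apply: eq_bigr => H hH.
rewrite -big_mkcond /=.
rewrite (eq_bigl (fun c => c \in hand H P)); last by move=> c; rewrite inE.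
by rewrite sumr_const (eqP (forallP hH P)) mulr_natl.
Qed.

End Proto.

Local Close Scope ring_scope.
Unset Implicit Arguments.

Theorem mainTheorem13 (F : finFieldType) (m d : nat) (Omega : finType)
  (tau : 'I_m.+1 -> nat) :
  1 < m -> m < #|F| -> 0 < d ->
  (forall P, 0 < tau P) ->
  \sum_(P < m.+1) tau P = #|F| ^ d.+1 ->
  tau (agentA m) = #|F| ^ d.+1 - #|F| ^ d ->
  (forall k : 'I_m, #|F| ^ d.-1 < tau (agentB k)) ->
  #|Omega| = \sum_(P < m.+1) tau P ->
  forall rho : run F d Omega, is_run tau rho ->
  forall (c : Omega) (P : 'I_m.+1),
    cond_prob tau (fun H : deal m Omega => H c == P) rho
    = ((tau P)%:R / (\sum_(P' < m.+1) tau P')%:R)%R.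
Proof.
move=> _ _ _ _ _ _ _ hOm rho [H0 ex0] c P.
set w := fun H : deal m Omega => run_weight H rho.
have sym : forall c1 c2,
  (\sum_(H | is_deal_of_type tau H && (H c2 == P)) w H =
  \sum_(H | is_deal_of_type tau H && (H c1 == P)) w H)%R.
  move=> c1 c2; case E: rho ex0 => [|t0 Ys] ex0.
    apply: (num_sym (t:=tperm c2 c1)); first exact: perm_inj.
      by rewrite tpermL.
    by move=> H _; rewrite /w E /run_weight !big_ord0.
  have h0 := forallP (proj2 (andP ex0)) (@ord0 (size Ys)).
  move: h0; rewrite /= Pi_E => /existsP [[[f a] b] /andP [v pr]].
  move: pr; rewrite /exec_of prefix_cons => /andP [/eqP ht0 _]; subst t0.
  move: v => /and3P [fi fs _].
  pose g y := if [pick x | f x == y] is Some x then x else c.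
  have gK : cancel g f.
    move=> y; rewrite /g; case: pickP => [x /eqP //|none].
    by have /existsP [x hx] := forallP fs y; rewrite none in hx.
  have fK : cancel f g by move=> x; apply: (injectiveP _ fi); rewrite gK.
  have [u [e he]] := phi_hit (f c1) (f c2).
  pose t x := g (phi u e (f x)).
  have tinj : injective t.
    by move=> x y /(can_inj gK) /phi_inj /(injectiveP _ fi).
  have [ti tK tiK] := injF_bij tinj.
  have [pinv pK1 pK2] := injF_bij (@phi_inj F d u e).
  have ht : forall x, f (t x) = phi u e (f x) by move=> x; rewrite /t gK.
  apply: (num_sym (t:=t)) => //; first by rewrite /t he fK.
  by move=> H _; rewrite /w E; exact: (weight_act fK gK tK tiK ht pK2).
rewrite -hOm /cond_prob /prob_and.
have hs := sum_num tau w P.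
have hc0 : forall c0 : Omega, (\sum_(H | is_deal_of_type tau H && (H c0 == P)) w H =
    \sum_(H | is_deal_of_type tau H && (H c == P)) w H)%R.
  by move=> c0; rewrite (sym c c0).
rewrite (eq_bigr _ (fun c0 _ => hc0 c0)) in hs.
rewrite sumr_const -[X in X = _]mulr_natr in hs.
have wge : forall H, (0 <= w H)%R.
  move=> H; apply: prodr_ge0 => k _; case: ifP => _ //.
  by rewrite invr_ge0 ler0n.
have w0 : (0 < w H0)%R.
  apply: prodr_gt0 => k _; rewrite (forallP (proj2 (andP ex0)) k).
  rewrite invr_gt0 ltr0n card_gt0; apply/set0Pn; eexists.
  exact: (forallP (proj2 (andP ex0)) k).
have T0 : (0 < \sum_(H | is_deal_of_type tau H) w H)%R.
  rewrite (bigD1 H0) ?(proj1 (andP ex0)) //=.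
  have : (0 <= \sum_(H | is_deal_of_type tau H && (H != H0)) w H)%R.
    by apply: sumr_ge0 => H _.
  lra.
have D0 : 0 < #|[set H : deal m Omega | is_deal_of_type tau H]|.
  by rewrite card_gt0; apply/set0Pn; exists H0; rewrite inE (proj1 (andP ex0)).
have n0 : 0 < #|Omega| by apply/card_gt0P; exists c; rewrite inE.
have eT : (\sum_(H | is_deal_of_type tau H && predT H) w H =
   \sum_(H | is_deal_of_type tau H) w H)%R.
  by apply: eq_bigl => H; rewrite andbT.
rewrite eT.
set N := (\sum_(H | _ && _) w H)%R in hs *.
set T := (\sum_(H | _) w H)%R in hs T0 *.
have hN : N = ((tau P)%:R * T / (#|Omega|)%:R)%R.
  by rewrite -hs mulrK // unitfE pnatr_eq0 -lt0n.
rewrite hN; field.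
by rewrite !pnatr_eq0 -!lt0n n0 D0 (gt_eqF T0).
Qed.
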